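(* Let $(\rho_t,\Phi_t)_t$ be smooth with $\rho_t>0$ probability densities on $\Omega$ satisfying $\partial_t\rho_t=(\Phi_t-\mathbb{E}_{\rho_t}[\Phi_t])\rho_t$, let $\rho^*>0$ be a fixed smooth probability density with $\rho_t\ne\rho^*$, and set $R_t=\sqrt{\rho_t}$, $R^*=\sqrt{\rho^*}$, $H_t=\cos^{-1}\big(\int R_tR^*dx\big)$, $T_t=\frac{2H_t}{\sin H_t}\frac{R^*-R_t\cos H_t}{R_t}$, and $\mathcal F_t[\Psi]=\Psi-\mathbb{E}_{R_t^2}[\Psi]$. Then $$\int(\partial_tT_t)\mathcal F_t[\Phi_t]R_t^2dx+\frac12\int T_t(\mathcal F_t[\Phi_t])^2R_t^2dx\ge-\int(\mathcal F_t[\Phi_t])^2R_t^2dx,$$ $$\int(\partial_tT_t)T_tR_t^2dx=-\int T_t\Phi_tR_t^2dx-\frac12\int T_t^2\mathcal F_t[\Phi_t]R_t^2dx.$$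
   Context: $\mathbb{E}_\rho[\Psi]=\int\Psi\rho\,dx$. *)

(* Defs.v *)
From HB Require Import structures.
From mathcomp Require Import all_boot all_order all_algebra.
From mathcomp Require Import all_classical all_reals all_analysis.
Set Implicit Arguments. Unset Strict Implicit. Unset Printing Implicit Defensive.
Import Order.TTheory GRing.Theory Num.Theory.
Import numFieldNormedType.Exports.
Local Open Scope classical_set_scope.
Local Open Scope ring_scope.

(* Omega is a measurable set D in a measure space
   (T, mu); "dx" is integration against mu (Lebesgue measure in the paper). *)

Section Defs.
Context {d : measure_display} {T : measurableType d} {R : realType}
        (mu : {measure set T -> \bar R}) (D : set T).

Definition pos_density (f : T -> R) : Prop :=
  [/\ measurable_fun D f, (forall x, D x -> 0 < f x),
      mu.-integrable D (fun x => (f x)%:E) & \int[mu]_(x in D) f x = 1].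

Definition expect (rho Psi : T -> R) : R := \int[mu]_(x in D) (Psi x * rho x).

Definition Rt (rho : R -> T -> R) (t : R) (x : T) : R := Num.sqrt (rho t x).

Definition Hang (rho : R -> T -> R) (rhos : T -> R) (t : R) : R :=
  acos (\int[mu]_(x in D) (Rt rho t x * Num.sqrt (rhos x))).

Definition Tfun (rho : R -> T -> R) (rhos : T -> R) (t : R) (x : T) : R :=
  let H := Hang rho rhos t in
  (2 * H / sin H) * ((Num.sqrt (rhos x) - Rt rho t x * cos H) / Rt rho t x).

Definition Fcent (rho : R -> T -> R) (t : R) (Psi : T -> R) (x : T) : R :=
  Psi x - expect (fun y => Rt rho t y ^+ 2) Psi.

End Defs.

(* Main.v *)
Require Import Defs.
From HB Require Import structures.
From mathcomp Require Import all_boot all_order all_algebra.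
From mathcomp Require Import all_classical all_reals all_analysis.
From mathcomp Require Import ring lra measurable_realfun lebesgue_integral_under.
Import Order.TTheory GRing.Theory Num.Theory.
Import numFieldNormedType.Exports.
Local Open Scope classical_set_scope.
Local Open Scope ring_scope.

Lemma quad_cs {R : realType} (a b c : R) : 0 <= a ->
  (forall l : R, 0 <= l ^+ 2 * a - 2 * l * b + c) -> b ^+ 2 <= a * c.
Proof.
move=> a0 H.
have [a0'|] := ltP 0 a.
  have := H (b / a).
  have -> : (b / a) ^+ 2 * a - 2 * (b / a) * b + c = (a * c - b ^+ 2) / a.
    by field; rewrite gt_eqF.
  by rewrite pmulr_lge0 ?invr_gt0 // subr_ge0.
move=> aa; have e0 : a = 0 by apply/eqP; rewrite eq_le aa a0.
move: H; rewrite e0 => H.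
have [->|b0] := eqVneq b 0; first by rewrite expr0n /= mul0r.
have := H ((c + 1) / (2 * b)).
have -> : ((c + 1) / (2 * b)) ^+ 2 * 0 - 2 * ((c + 1) / (2 * b)) * b + c = -1.
  by field; rewrite b0.
by rewrite ler0N1.
Qed.

Lemma xcos_le_sin {R : realType} (h : R) : 0 <= h <= pi -> h * cos h <= sin h.
Proof.
move=> hr.
pose f := fun x : R => sin x - x * cos x.
have df (x : R) : is_derive x 1 f (x * sin x).
  rewrite /f; apply: is_derive_eq.
  by rewrite /GRing.scale /=; ring.
have := @ger0_derive1_le_cc R f 0 pi _ _ _ 0 h.
rewrite /f sin0 mul0r subr0 subr_ge0; apply.
- by move=> x _; exact: (@ex_derive _ _ _ _ _ _ _ (df x)).  
- move=> x; rewrite in_itv /= => /andP[x0 xp].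
  rewrite derive1E derive_val; apply: mulr_ge0; first exact: ltW.
  by apply: sin_ge0_pi; rewrite !ltW.
- apply: continuous_subspaceT => x.
  exact: (differentiable_continuous (proj1 (derivable1_diffP _ _) (@ex_derive _ _ _ _ _ _ _ (df x)))).
- by rewrite in_itv /= lexx pi_ge0.
- by rewrite in_itv /=.
- by case/andP: hr.
Qed.
Lemma big_deriv {R : realType} (H Rf : R -> R) (Sx t hd rd : R) :
  is_derive t 1 H hd -> is_derive t 1 Rf rd -> sin (H t) != 0 -> Rf t != 0 ->
  is_derive t 1 (fun s => 2 * H s / sin (H s) * ((Sx - Rf s * cos (H s)) / Rf s))
   ((2 * hd / sin (H t) - 2 * H t * cos (H t) * hd / sin (H t) ^+ 2) * ((Sx - Rf t * cos (H t)) / Rf t)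
    + (2 * H t / sin (H t)) * (sin (H t) * hd - Sx * rd / (Rf t) ^+ 2)).
Proof.
move=> dH dR sn0 R0.
have dsH : is_derive t 1 (fun s => sin (H s)) (cos (H t) * hd) :=
  is_derive1_comp (is_derive_sin _) dH.
have dcH : is_derive t 1 (fun s => cos (H s)) (- sin (H t) * hd) :=
  is_derive1_comp (is_derive_cos _) dH.
have dis : is_derive t 1 (fun s => (sin (H s))^-1) (- (sin (H t)) ^- 2 *: (cos (H t) * hd)) :=
  @is_deriveV _ (fun s => sin (H s)) t _ 1 sn0 dsH.
have diR : is_derive t 1 (fun s => (Rf s)^-1) (- (Rf t) ^- 2 *: rd) :=
  @is_deriveV _ Rf t _ 1 R0 dR.
apply: is_derive_eq.
rewrite /GRing.scale /=.
field.
by rewrite sn0 R0.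
Qed.

Section Main.
Context {d : measure_display} {T : measurableType d} {R : realType}
  (mu : {measure set T -> \bar R}) (D : set T) (I : set R)
  (rho Phi : R -> T -> R) (rhos : T -> R).
Hypothesis mD : measurable D.
Hypothesis oI : open I.
Hypothesis hrho : forall t, I t -> pos_density mu D (rho t).
Hypothesis hrhos : pos_density mu D rhos.
Hypothesis mPhi : forall t, I t -> measurable_fun D (Phi t).
Hypothesis iPr : forall t, I t -> mu.-integrable D (fun x => ((Phi t x) ^+ 2 * rho t x)%:E).
Hypothesis iPs : forall t, I t -> mu.-integrable D (fun x => ((Phi t x) ^+ 2 * rhos x)%:E).
Hypothesis hder : forall t x, I t -> D x ->
     is_derive t 1 (fun s => rho s x)
       ((Phi t x - expect mu D (rho t) (Phi t)) * rho t x).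
Hypothesis hdom : forall t, I t -> exists2 e : R, 0 < e &
     exists2 g : T -> R, mu.-integrable D (fun x => (g x)%:E) &
       forall s x, I s -> `|s - t| < e -> D x ->
         `|(Phi s x - expect mu D (rho s) (Phi s)) * Rt rho s x * Num.sqrt (rhos x)|
           <= g x.
Hypothesis hne : forall t, I t -> ~ {ae mu, forall x, D x -> rho t x = rhos x}.

Lemma msqrt (f : T -> R) : measurable_fun D f -> measurable_fun D (fun x => Num.sqrt (f x)).
Proof.
move=> mf.
exact: (measurableT_comp (continuous_measurable_fun (@sqrt_continuous R)) mf).
Qed.

Lemma mrho s : I s -> measurable_fun D (rho s).
Proof. by move=> Is; case: (hrho _ Is). Qed.
Lemma mrhos : measurable_fun D rhos.
Proof. by case: hrhos. Qed.
Lemma rho_gt0 s x : I s -> D x -> 0 < rho s x.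
Proof. by move=> Is Dx; case: (hrho _ Is) => _ H _ _; exact: H. Qed.
Lemma rhos_gt0 x : D x -> 0 < rhos x.
Proof. by move=> Dx; case: hrhos => _ H _ _; exact: H. Qed.
Lemma irho s : I s -> mu.-integrable D (EFin \o rho s).
Proof. by move=> Is; case: (hrho _ Is). Qed.
Lemma irhos : mu.-integrable D (EFin \o rhos).
Proof. by case: hrhos. Qed.

Lemma am_gm (a b : R) : 0 <= a -> 0 <= b -> Num.sqrt a * Num.sqrt b <= a + b.
Proof.
move=> a0 b0.
have := sqr_sqrtr a0; have := sqr_sqrtr b0.
have := sqrtr_ge0 a; have := sqrtr_ge0 b.
set x := Num.sqrt a; set y := Num.sqrt b => y0 x0 hb ha.
rewrite -ha -hb; nra.
Qed.

Lemma iRS s : I s -> mu.-integrable D (EFin \o (fun x => Rt rho s x * Num.sqrt (rhos x))).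
Proof.
move=> Is.
apply: (le_integrable mD (g := (EFin \o rho s) \+ (EFin \o rhos))).
- apply/measurable_EFinP; apply: measurable_funM; last exact: msqrt _ mrhos.
  exact: msqrt _ (mrho _ Is).
- move=> x Dx /=; rewrite lee_fin.
  have r0 := rho_gt0 _ _ Is Dx; have r1 := rhos_gt0 _ Dx.
  rewrite ger0_norm ?mulr_ge0 ?sqrtr_ge0 // ger0_norm; last by rewrite addr_ge0 // ltW.
  by rewrite /Rt; apply: am_gm; apply: ltW.
- by apply: integrableD => //; [exact: irho _ Is|exact: irhos].
Qed.


Lemma is_deriveMc (f : R -> R) s (df k : R) :
  is_derive s (1:R) f df -> is_derive s (1:R) (fun u => f u * k) (df * k).
Proof.
move=> H; apply: is_derive_eq.
by rewrite /GRing.scale /=; ring.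
Qed.

Definition Ef (s : R) := expect mu D (rho s) (Phi s).
Definition cf (s : R) := \int[mu]_(x in D) (Rt rho s x * Num.sqrt (rhos x)).

Lemma dRt s x : I s -> D x ->
  is_derive s 1 (fun u => Rt rho u x) ((Phi s x - Ef s) * Rt rho s x / 2).
Proof.
move=> Is Dx; have r0 := rho_gt0 _ _ Is Dx.
have h1 := is_derive1_comp (is_derive1_sqrt r0) (hder _ _ Is Dx).
apply: (is_derive_eq h1).
have e : rho s x = Num.sqrt (rho s x) ^+ 2 by rewrite sqr_sqrtr // ltW.
rewrite /Rt /Ef {2}e.
have : Num.sqrt (rho s x) != 0 by rewrite gt_eqF // sqrtr_gt0.
move=> ne; field.
exact: ne.
Qed.

Lemma open_ball_in t : I t -> exists2 e : R, 0 < e & forall s, `|s - t| < e -> I s.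
Proof.
move=> It.
have := oI t It.
move=> /nbhs_ballP [e /= e0 H].
exists e => // s st; apply: H; rewrite /ball /= distrC //.
Qed.

Lemma dc t : I t ->
  is_derive t 1 cf (\int[mu]_(x in D) ((Phi t x - Ef t) * Rt rho t x * Num.sqrt (rhos x) / 2)).
Proof.
move=> It.
have [e e0 [g ig hg]] := hdom _ It.
have [e1 e10 he1] := open_ball_in _ It.
pose del := Num.min e e1.
have del0 : 0 < del by rewrite lt_min e0 e10.
have Isub : forall s, `](t - del), (t + del)[%classic s -> I s /\ `|s - t| < e.
  move=> s; rewrite /= in_itv /= => /andP[a b].
  have : `|s - t| < del by rewrite ltr_norml; apply/andP; split; lra.
  rewrite lt_min => /andP[h1 h2]; split => //; exact: he1.
pose f := fun s y => Rt rho s y * Num.sqrt (rhos y).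
have Ia : `](t - del), (t + del)[%classic t.
  by rewrite /= in_itv /=; apply/andP; split; lra.
have intf : forall s, `](t - del), (t + del)[%classic s -> mu.-integrable D (EFin \o f s).
  by move=> s /Isub [Is _]; exact: iRS _ Is.
have df s y : I s -> D y -> is_derive s 1 (f ^~ y) ((Phi s y - Ef s) * Rt rho s y / 2 * Num.sqrt (rhos y)).
  by move=> Is Dy; apply: is_deriveMc; exact: dRt _ _ Is Dy.
have derf1 : forall s y, `](t - del), (t + del)[%classic s -> D y -> derivable (f ^~ y) s 1.
  by move=> s y /Isub [Is _] Dy; exact: (@ex_derive _ _ _ _ _ _ _ (df s y Is Dy)).
have G_ge0 : forall y, 0 <= `|g y| by move=> y; exact: normr_ge0.
have intG : mu.-integrable D (EFin \o (fun y => `|g y|)).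
  exact: (integrable_abse ig).
have G_ub : forall s y, `](t - del), (t + del)[%classic s -> D y -> `|partial1of2 f s y| <= `|g y|.
  move=> s y /Isub [Is st] Dy.
  rewrite partial1of2E (@derive_val _ _ _ _ _ _ _ (df s y Is Dy)).
  have hz := hg s y Is st Dy.
  rewrite (_ : _ * _ = ((Phi s y - expect mu D (rho s) (Phi s)) * Rt rho s y * Num.sqrt (rhos y)) / 2); last by rewrite /Ef; ring.
  set z := (_ * _ * _) in hz *.
  rewrite normrM (ger0_norm (_ : 0 <= 2^-1)) ?invr_ge0 ?ler0n //.
  have := normr_ge0 z; have := ler_norm (g y); lra.
have dv := differentiation_under_integral mD Ia intf derf1 G_ge0 intG G_ub.
have db := derivable_under_integral mD Ia intf derf1 G_ge0 intG G_ub.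
apply: (is_derive_eq (derivableP db)).
rewrite -derive1E dv.
apply: eq_Rintegral => y /[!inE] Dy.
rewrite partial1of2E (@derive_val _ _ _ _ _ _ _ (df t y It Dy)).
by rewrite /Ef; ring.
Qed.

Variable t : R.
Hypothesis It : I t.

Definition Rr x := Rt rho t x.
Definition S x := Num.sqrt (rhos x).
Definition E := Ef t.
Definition F x := Phi t x - E.
Definition G x := (1 + Phi t x ^+ 2) * (rho t x + rhos x).

Lemma mRr : measurable_fun D Rr.
Proof. exact: msqrt _ (mrho _ It). Qed.
Lemma mS : measurable_fun D S.
Proof. exact: msqrt _ mrhos. Qed.
Lemma mF : measurable_fun D F.
Proof. by apply: measurable_funB; [exact: mPhi|exact: measurable_cst]. Qed.

Lemma Rr2 x : D x -> Rr x ^+ 2 = rho t x.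
Proof. by move=> Dx; rewrite /Rr /Rt sqr_sqrtr // ltW // rho_gt0. Qed.
Lemma S2 x : D x -> S x ^+ 2 = rhos x.
Proof. by move=> Dx; rewrite /S sqr_sqrtr // ltW // rhos_gt0. Qed.
Lemma Rr_gt0 x : D x -> 0 < Rr x.
Proof. by move=> Dx; rewrite /Rr /Rt sqrtr_gt0 rho_gt0. Qed.
Lemma S_gt0 x : D x -> 0 < S x.
Proof. by move=> Dx; rewrite /S sqrtr_gt0 rhos_gt0. Qed.

Lemma iG : mu.-integrable D (EFin \o G).
Proof.
apply: (le_integrable mD (g := (((EFin \o rho t) \+ (EFin \o rhos)) \+
   (fun x => ((Phi t x) ^+ 2 * rho t x)%:E)) \+ (fun x => ((Phi t x) ^+ 2 * rhos x)%:E))).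
- apply/measurable_EFinP; apply: measurable_funM.
    apply: measurable_funD; first exact: measurable_cst.
    exact: measurable_funX (mPhi _ It).
  by apply: measurable_funD; [exact: mrho|exact: mrhos].
- move=> x Dx /=; rewrite lee_fin le_eqVlt; apply/orP; left; apply/eqP.
  by congr (`|_|); rewrite /G; ring.
- apply: integrableD => //; last exact: iPs.
  apply: integrableD => //; last exact: iPr.
  by apply: integrableD => //; [exact: irho _ It|exact: irhos].
Qed.

Definition good (f : T -> R) :=
  measurable_fun D f /\ exists C : R, forall x, D x -> `|f x| <= C * G x.

Lemma G_ge0 x : D x -> 0 <= G x.
Proof.
move=> Dx; rewrite /G mulr_ge0 //.
  by rewrite addr_ge0 // sqr_ge0.
by rewrite addr_ge0 // ltW // ?rho_gt0 ?rhos_gt0.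
Qed.

Lemma good_int f : good f -> mu.-integrable D (EFin \o f).
Proof.
case=> mf [C HC].
apply: (le_integrable mD (g := fun x => (C%:E * (EFin \o G) x)%E)).
- exact/measurable_EFinP.
- move=> x Dx /=; rewrite lee_fin.
  exact: le_trans (HC x Dx) (ler_norm _).
- exact: integrableZl iG.
Qed.

Lemma goodD f g : good f -> good g -> good (fun x => f x + g x).
Proof.
move=> [mf [C1 H1]] [mg [C2 H2]]; split; first exact: measurable_funD.
exists (C1 + C2) => x Dx; apply: le_trans (ler_normD _ _) _.
by rewrite mulrDl; apply: lerD; [exact: H1|exact: H2].
Qed.

Lemma goodZ k f : good f -> good (fun x => k * f x).
Proof.
move=> [mf [C H]]; split; first by apply: measurable_funM => //; exact: measurable_cst.
exists (`|k| * C) => x Dx; rewrite normrM -mulrA ler_wpM2l //; exact: H.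
Qed.

Lemma RintD f g : good f -> good g ->
  \int[mu]_(x in D) (f x + g x) = \int[mu]_(x in D) f x + \int[mu]_(x in D) g x.
Proof. by move=> gf gg; apply: RintegralD => //; exact: good_int. Qed.

Lemma RintZ k f : good f ->
  \int[mu]_(x in D) (k * f x) = k * \int[mu]_(x in D) f x.
Proof. by move=> gf; apply: RintegralZl => //; exact: good_int. Qed.

Lemma good_w {g w f : T -> R} {K : R} : (forall x, g x = w x * f x) ->
  measurable_fun D w -> measurable_fun D f ->
  (forall x, D x -> 0 <= w x <= rho t x + rhos x) ->
  (forall x, D x -> `|f x| <= K * (1 + Phi t x ^+ 2)) -> good g.
Proof.
move=> eg mw mf hw hf.
have -> : g = (fun x => w x * f x) by apply/funext => x; exact: eg.
split; first exact: measurable_funM.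
exists K => x Dx; rewrite normrM /G.
have [w0 w1] := andP (hw x Dx).
rewrite (ger0_norm w0).
rewrite (_ : K * _ = (rho t x + rhos x) * (K * (1 + Phi t x ^+ 2))); last by ring.
by apply: ler_pM => //; exact: hf.
Qed.

Lemma bnd1 x : `|1 : R| <= 1 * (1 + Phi t x ^+ 2).
Proof. by rewrite normr1 mul1r lerDl sqr_ge0. Qed.

Lemma bndF x : `|F x| <= (1 + `|E|) * (1 + Phi t x ^+ 2).
Proof.
rewrite /F; apply: le_trans (ler_normB _ _) _.
have h1 : Phi t x ^+ 2 = `|Phi t x| ^+ 2 by rewrite real_normK // num_real.
rewrite h1.
have := normr_ge0 (Phi t x); have := normr_ge0 E.
set p := `|Phi t x|; set q := `|E| => q0 p0.
have := sqr_ge0 (p - 1); have := mulr_ge0 q0 (sqr_ge0 p).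
nra.
Qed.

Lemma bndF2 x : `|F x ^+ 2| <= (2 + 2 * E ^+ 2) * (1 + Phi t x ^+ 2).
Proof.
rewrite ger0_norm ?sqr_ge0 // /F.
have := sqr_ge0 (Phi t x + E); have := sqr_ge0 (Phi t x * E).
nra.
Qed.

Lemma bndP x : `|Phi t x| <= 1 * (1 + Phi t x ^+ 2).
Proof.
have h1 : Phi t x ^+ 2 = `|Phi t x| ^+ 2 by rewrite real_normK // num_real.
rewrite h1; have := normr_ge0 (Phi t x); set p := `|Phi t x| => p0.
have := sqr_ge0 (p - 1); nra.
Qed.

Lemma wa x : D x -> 0 <= Rr x ^+ 2 <= rho t x + rhos x.
Proof.
move=> Dx; rewrite Rr2 // ltW ?rho_gt0 //= lerDl ltW // rhos_gt0 //.
Qed.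
Lemma wc x : D x -> 0 <= S x ^+ 2 <= rho t x + rhos x.
Proof.
move=> Dx; rewrite S2 // ltW ?rhos_gt0 //= lerDr ltW // rho_gt0 //.
Qed.
Lemma wb x : D x -> 0 <= Rr x * S x <= rho t x + rhos x.
Proof.
move=> Dx; apply/andP; split.
  by apply: mulr_ge0; apply: ltW; [exact: Rr_gt0|exact: S_gt0].
by rewrite /Rr /S /Rt; apply: am_gm; apply: ltW; [exact: rho_gt0|exact: rhos_gt0].
Qed.

Definition a0 x := Rr x ^+ 2.
Definition a1 x := Rr x ^+ 2 * F x.
Definition a2 x := Rr x ^+ 2 * F x ^+ 2.
Definition b0 x := Rr x * S x.
Definition b1 x := Rr x * S x * F x.
Definition b2 x := Rr x * S x * F x ^+ 2.
Definition c0 x := S x ^+ 2.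
Definition c1 x := S x ^+ 2 * F x.
Definition aP x := Rr x ^+ 2 * Phi t x.

Lemma mRr2 : measurable_fun D (fun x => Rr x ^+ 2).
Proof. exact: measurable_funX mRr. Qed.
Lemma mS2 : measurable_fun D (fun x => S x ^+ 2).
Proof. exact: measurable_funX mS. Qed.
Lemma mRS : measurable_fun D (fun x => Rr x * S x).
Proof. exact: measurable_funM mRr mS. Qed.
Lemma mF2 : measurable_fun D (fun x => F x ^+ 2).
Proof. exact: measurable_funX mF. Qed.
Lemma m1 : measurable_fun D (fun x : T => (1 : R)).
Proof. exact: measurable_cst. Qed.

Lemma ga0 : good a0.
Proof. apply: (good_w (f := fun _ => 1) _ mRr2 m1 wa (fun x _ => bnd1 x)) => x; by rewrite /a0 mulr1. Qed.
Lemma ga1 : good a1.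
Proof. exact: (good_w (fun x => erefl) mRr2 mF wa (fun x _ => bndF x)). Qed.
Lemma ga2 : good a2.
Proof. exact: (good_w (fun x => erefl) mRr2 mF2 wa (fun x _ => bndF2 x)). Qed.
Lemma gb0 : good b0.
Proof. apply: (good_w (f := fun _ => 1) _ mRS m1 wb (fun x _ => bnd1 x)) => x; by rewrite /b0 mulr1. Qed.
Lemma gb1 : good b1.
Proof. exact: (good_w (fun x => erefl) mRS mF wb (fun x _ => bndF x)). Qed.
Lemma gb2 : good b2.
Proof. exact: (good_w (fun x => erefl) mRS mF2 wb (fun x _ => bndF2 x)). Qed.
Lemma gc0 : good c0.
Proof. apply: (good_w (f := fun _ => 1) _ mS2 m1 wc (fun x _ => bnd1 x)) => x; by rewrite /c0 mulr1. Qed.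
Lemma gc1 : good c1.
Proof. exact: (good_w (fun x => erefl) mS2 mF wc (fun x _ => bndF x)). Qed.
Lemma gaP : good aP.
Proof. exact: (good_w (fun x => erefl) mRr2 (mPhi _ It) wa (fun x _ => bndP x)). Qed.

Ltac gd := solve [repeat first [apply: goodD | apply: goodZ | exact: ga0 | exact: ga1
  | exact: ga2 | exact: gb0 | exact: gb1 | exact: gb2 | exact: gc0 | exact: gc1 | exact: gaP]].

Lemma Ia0 : Rintegral mu D a0 = 1.
Proof.
transitivity (\int[mu]_(x in D) rho t x).
  by apply: eq_Rintegral => x /[!inE] Dx; exact: Rr2.
by case: (hrho _ It).
Qed.

Lemma Ic0 : Rintegral mu D c0 = 1.
Proof.
transitivity (\int[mu]_(x in D) rhos x).
  by apply: eq_Rintegral => x /[!inE] Dx; exact: S2.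
by case: hrhos.
Qed.

Lemma Ib0 : Rintegral mu D b0 = cf t.
Proof. by []. Qed.

Lemma EE : E = \int[mu]_(x in D) aP x.
Proof.
rewrite /E /Ef /expect; apply: eq_Rintegral => x /[!inE] Dx.
by rewrite /aP Rr2 // mulrC.
Qed.

Lemma Ia1 : \int[mu]_(x in D) a1 x = 0.
Proof.
transitivity (\int[mu]_(x in D) (aP x + (- E) * a0 x)).
  by apply: eq_Rintegral => x _; rewrite /a1 /aP /a0 /F; ring.
rewrite RintD; last 2 first.
- exact: gaP.
- exact: goodZ ga0.
rewrite RintZ; last exact: ga0.
by rewrite Ia0 -EE; ring.
Qed.

Lemma FcentE x : Fcent mu D rho t (Phi t) x = F x.
Proof.
rewrite /Fcent /F /E /Ef /expect; congr (_ - _).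
by apply: eq_Rintegral => y /[!inE] Dy; rewrite -/(Rr y) Rr2.
Qed.

Lemma c_ge0 : 0 <= cf t.
Proof.
apply: Rintegral_ge0 => x Dx; apply: mulr_ge0; apply: ltW.
  exact: Rr_gt0. exact: S_gt0.
Qed.

Lemma c_lt1 : cf t < 1.
Proof.
rewrite ltNge; apply/negP => c1.
pose q x := (Rr x - S x) ^+ 2.
have eq_q x : q x = a0 x + ((-2) * b0 x + c0 x).
  by rewrite /q /a0 /b0 /c0; ring.
have gq : good q.
  have -> : q = (fun x => a0 x + ((-2) * b0 x + c0 x)) by apply/funext => x; exact: eq_q.
  apply: goodD; first exact: ga0.
  apply: goodD; last exact: gc0.
  exact: goodZ gb0.
have hq : \int[mu]_(x in D) q x = 2 - 2 * cf t.
  transitivity (\int[mu]_(x in D) (a0 x + ((-2) * b0 x + c0 x))).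
    by apply: eq_Rintegral => x _; exact: eq_q.
  rewrite RintD; try gd.
  rewrite RintD; try gd.
  rewrite RintZ; try gd.
  by rewrite Ia0 Ib0 Ic0; ring.
have h0 : \int[mu]_(x in D) q x = 0.
  apply/eqP; rewrite eq_le; apply/andP; split.
    by rewrite hq; lra.
  by apply: Rintegral_ge0 => x _; exact: sqr_ge0.
have iq := good_int _ gq.
have he : (\int[mu]_(x in D) (q x)%:E = 0)%E.
  by rewrite -(fineK (integrable_fin_num mD iq)); move: h0; rewrite /Rintegral => ->.
have mq : measurable_fun D (EFin \o q) by apply/measurable_EFinP; case: gq.
have habs : (\int[mu]_(x in D) `|(EFin \o q) x| = 0)%E.
  rewrite -he; apply: eq_integral => x _ /=.
  by rewrite ger0_norm // sqr_ge0.
have H := proj1 (ae_eq_integral_abs mu mD mq) habs.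
apply: (hne _ It).
apply: filterS H => x /= H Dx.
have := H Dx => /eqP; rewrite eqe /q sqrf_eq0 subr_eq0 => /eqP e.
by rewrite -Rr2 // e S2.
Qed.

Definition cc := cf t.
Definition h := Hang mu D rho rhos t.
Definition sn := sin h.
Definition co := cos h.
Definition P := Rintegral mu D b1.
Definition hd := - sn^-1 * (P / 2).
Definition A := 2 * hd / sn - 2 * h * co * hd / sn ^+ 2.
Definition DT x := A * ((S x - Rr x * co) / Rr x) + (2 * h / sn) * (sn * hd - S x * F x / (2 * Rr x)).

Lemma cc_in : -1 < cc < 1.
Proof. by rewrite c_lt1 andbT /cc; apply: lt_le_trans c_ge0; rewrite ltrN10. Qed.

Lemma hE : h = acos cc.
Proof. by []. Qed.

Lemma snE : sn = Num.sqrt (1 - cc ^+ 2).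
Proof.
rewrite /sn hE sin_acos //.
by have /andP[a b] := cc_in; rewrite !ltW.
Qed.

Lemma sn_gt0 : 0 < sn.
Proof.
rewrite snE sqrtr_gt0 subr_gt0.
have /andP[a b] := cc_in; have := c_ge0; rewrite -/cc => c0.
rewrite expr2; nra.
Qed.

Lemma coE : co = cc.
Proof.
rewrite /co hE acosK //; have /andP[a b] := cc_in.
by rewrite in_itv /= !ltW.
Qed.

Lemma dcP : is_derive t 1 cf (P / 2).
Proof.
apply: (is_derive_eq (dc _ It)).
rewrite /P; transitivity (\int[mu]_(x in D) (2^-1 * b1 x)).
  by apply: eq_Rintegral => x _; rewrite /b1 /F /E /Rr /S; ring.
by rewrite RintZ; [ring|exact: gb1].
Qed.

Lemma dH : is_derive t 1 (fun s => Hang mu D rho rhos s) hd.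
Proof.
apply: (is_derive_eq (is_derive1_comp (is_derive1_acos cc_in) dcP)).
by rewrite /hd snE.
Qed.

Lemma dT x : D x -> is_derive t 1 (fun s => Tfun mu D rho rhos s x) (DT x).
Proof.
move=> Dx.
have dR : is_derive t 1 (fun u => Rt rho u x) (F x * Rr x / 2) := dRt _ _ It Dx.
have sn0 : sin (Hang mu D rho rhos t) != 0 by rewrite gt_eqF // sn_gt0.
have R0 : Rt rho t x != 0 by rewrite gt_eqF // Rr_gt0.
apply: (is_derive_eq (@big_deriv R _ _ (S x) t _ _ dH dR sn0 R0)).
rewrite /DT /A -/h -/sn -/co -/(Rr x).
field.
by rewrite sn0 R0.
Qed.

Lemma dT1 x : D x -> derive1 (fun s => Tfun mu D rho rhos s x) t = DT x.
Proof. by move=> Dx; rewrite derive1E (@derive_val _ _ _ _ _ _ _ (dT x Dx)). Qed.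

Lemma TE x : Tfun mu D rho rhos t x = (2 * h / sn) * ((S x - Rr x * co) / Rr x).
Proof. by []. Qed.

Definition Qv := Rintegral mu D a2.
Definition Wv := Rintegral mu D b2.
Definition Uv := Rintegral mu D c1.
Definition K := 2 * h / sn.

Lemma sn0 : sn != 0.
Proof. by rewrite gt_eqF // sn_gt0. Qed.

Lemma L1 : \int[mu]_(x in D) (derive1 (fun s => Tfun mu D rho rhos s x) t
                          * Fcent mu D rho t (Phi t) x * Rt rho t x ^+ 2)
  = A * P - h / sn * Wv.
Proof.
transitivity (\int[mu]_(x in D) (A * b1 x + ((- A * co) * a1 x + ((2 * h * hd) * a1 x + (- (h / sn)) * b2 x)))).
  apply: eq_Rintegral => x /[!inE] Dx; rewrite dT1 // FcentE /DT /b1 /a1 /b2.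
  have R0 : Rr x != 0 by rewrite gt_eqF // Rr_gt0.
  rewrite /Rr in R0 *.
  field.
  by rewrite sn0 R0.
rewrite !RintD; try gd.
rewrite !RintZ; try gd.
rewrite Ia1 -/P -/Wv.
ring.
Qed.

Lemma L2 : \int[mu]_(x in D) (Tfun mu D rho rhos t x
                          * (Fcent mu D rho t (Phi t) x) ^+ 2 * Rt rho t x ^+ 2)
  = K * Wv - K * co * Qv.
Proof.
transitivity (\int[mu]_(x in D) (K * b2 x + (- K * co) * a2 x)).
  apply: eq_Rintegral => x /[!inE] Dx; rewrite TE FcentE /K /b2 /a2.
  have R0 : Rr x != 0 by rewrite gt_eqF // Rr_gt0.
  rewrite /Rr in R0 *.
  field.
  by rewrite sn0 R0.
rewrite !RintD; try gd.
rewrite !RintZ; try gd.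
rewrite -/Qv -/Wv.
ring.
Qed.

Lemma L3 : \int[mu]_(x in D) ((Fcent mu D rho t (Phi t) x) ^+ 2 * Rt rho t x ^+ 2) = Qv.
Proof.
rewrite /Qv; apply: eq_Rintegral => x _.
by rewrite FcentE /a2 /Rr mulrC.
Qed.

Lemma Qv_ge0 : 0 <= Qv.
Proof. by apply: Rintegral_ge0 => x _; rewrite /a2 mulr_ge0 // sqr_ge0. Qed.

Lemma CS : P ^+ 2 <= Qv * sn ^+ 2.
Proof.
apply: quad_cs; first exact: Qv_ge0.
move=> l.
have H : 0 <= \int[mu]_(x in D) ((l * Rr x * F x - S x + co * Rr x) ^+ 2).
  by apply: Rintegral_ge0 => x _; exact: sqr_ge0.
have -> : l ^+ 2 * Qv - 2 * l * P + sn ^+ 2 =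
   \int[mu]_(x in D) ((l * Rr x * F x - S x + co * Rr x) ^+ 2); last exact: H.
transitivity (\int[mu]_(x in D) ((l ^+ 2) * a2 x + ((- 2 * l) * b1 x + ((2 * l * co) * a1 x
   + (1 * c0 x + ((- 2 * co) * b0 x + (co ^+ 2) * a0 x)))))); last first.
  by apply: eq_Rintegral => x _; rewrite /a2 /b1 /a1 /c0 /b0 /a0; ring.
rewrite !RintD; try gd.
rewrite !RintZ; try gd.
rewrite Ia1 Ia0 Ib0 Ic0 -/P -/Qv -/cc -coE sin2cos2 -/co.
ring.
Qed.

Lemma hco : h * co <= sn.
Proof.
apply: xcos_le_sin.
have /andP[a b] := cc_in.
by rewrite hE acos_ge0 ?acos_lepi // !ltW.
Qed.

Lemma ineq1 : \int[mu]_(x in D) (derive1 (fun s => Tfun mu D rho rhos s x) t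
                          * Fcent mu D rho t (Phi t) x * Rt rho t x ^+ 2)
     + 2^-1 * (\int[mu]_(x in D) (Tfun mu D rho rhos t x
                          * (Fcent mu D rho t (Phi t) x) ^+ 2 * Rt rho t x ^+ 2))
     >= - (\int[mu]_(x in D) ((Fcent mu D rho t (Phi t) x) ^+ 2 * Rt rho t x ^+ 2)).
Proof.
rewrite L1 L2 L3 -subr_ge0.
have -> : A * P - h / sn * Wv + 2^-1 * (K * Wv - K * co * Qv) - - Qv
   = (sn - h * co) * (Qv * sn ^+ 2 - P ^+ 2) / sn ^+ 3.
  rewrite /A /hd /K; field; exact: sn0.
apply: divr_ge0; last by rewrite exprn_ge0 // ltW // sn_gt0.
apply: mulr_ge0; rewrite subr_ge0; [exact: hco|exact: CS].
Qed.

Lemma L4 : \int[mu]_(x in D) (derive1 (fun s => Tfun mu D rho rhos s x) t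
                          * Tfun mu D rho rhos t x * Rt rho t x ^+ 2)
  = A * K - 2 * co * A * K * cc + co ^+ 2 * A * K + K ^+ 2 * sn * hd * cc
    - K ^+ 2 * sn * hd * co - K ^+ 2 / 2 * Uv + K ^+ 2 * co / 2 * P.
Proof.
transitivity (\int[mu]_(x in D) ((A * K) * c0 x + ((- 2 * co * A * K) * b0 x
   + ((co ^+ 2 * A * K) * a0 x + ((K ^+ 2 * sn * hd) * b0 x + ((- (K ^+ 2) * sn * hd * co) * a0 x
   + ((- (K ^+ 2) / 2) * c1 x + (K ^+ 2 * co / 2) * b1 x))))))).
  apply: eq_Rintegral => x /[!inE] Dx; rewrite dT1 // TE /DT /K /c0 /b0 /a0 /c1 /b1.
  have R0 : Rr x != 0 by rewrite gt_eqF // Rr_gt0.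
  rewrite /Rr in R0 *.
  field.
  by rewrite sn0 R0.
rewrite !RintD; try gd.
rewrite !RintZ; try gd.
rewrite Ia0 Ib0 Ic0 -/P -/Uv -/cc.
ring.
Qed.

Lemma L5 : \int[mu]_(x in D) (Tfun mu D rho rhos t x * Phi t x * Rt rho t x ^+ 2)
  = K * P + K * E * cc - K * co * E.
Proof.
transitivity (\int[mu]_(x in D) (K * b1 x + ((K * E) * b0 x + ((- K * co) * a1 x
   + (- K * co * E) * a0 x)))).
  apply: eq_Rintegral => x /[!inE] Dx; rewrite TE /K /b1 /b0 /a1 /a0 /F.
  have R0 : Rr x != 0 by rewrite gt_eqF // Rr_gt0.
  rewrite /Rr in R0 *.
  field.
  by rewrite sn0 R0.
rewrite !RintD; try gd.
rewrite !RintZ; try gd.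
rewrite Ia0 Ia1 Ib0 -/P -/cc.
ring.
Qed.

Lemma L6 : \int[mu]_(x in D) (Tfun mu D rho rhos t x ^+ 2
                          * Fcent mu D rho t (Phi t) x * Rt rho t x ^+ 2)
  = K ^+ 2 * Uv - 2 * co * K ^+ 2 * P.
Proof.
transitivity (\int[mu]_(x in D) ((K ^+ 2) * c1 x + ((- 2 * co * K ^+ 2) * b1 x
   + (co ^+ 2 * K ^+ 2) * a1 x))).
  apply: eq_Rintegral => x /[!inE] Dx; rewrite TE FcentE /K /c1 /b1 /a1.
  have R0 : Rr x != 0 by rewrite gt_eqF // Rr_gt0.
  rewrite /Rr in R0 *.
  field.
  by rewrite sn0 R0.
rewrite !RintD; try gd.
rewrite !RintZ; try gd.
rewrite Ia1 -/P -/Uv.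
ring.
Qed.

Lemma eq2 : \int[mu]_(x in D) (derive1 (fun s => Tfun mu D rho rhos s x) t
                          * Tfun mu D rho rhos t x * Rt rho t x ^+ 2)
     = - (\int[mu]_(x in D) (Tfun mu D rho rhos t x * Phi t x * Rt rho t x ^+ 2))
       - 2^-1 * (\int[mu]_(x in D) (Tfun mu D rho rhos t x ^+ 2
                          * Fcent mu D rho t (Phi t) x * Rt rho t x ^+ 2)).
Proof.
rewrite L4 L5 L6 -coE.
apply/eqP; rewrite -subr_eq0; apply/eqP.
have sc : sn ^+ 2 = 1 - co ^+ 2 by rewrite /sn sin2cos2.
set X := (X in X = 0).
have -> : X = A * K * (1 - co ^+ 2 - sn ^+ 2).
  rewrite /X /A /hd /K; field; exact: sn0.
by rewrite sc; ring.
Qed.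

Lemma main_sec :
    (\int[mu]_(x in D) (derive1 (fun s => Tfun mu D rho rhos s x) t
                          * Fcent mu D rho t (Phi t) x * Rt rho t x ^+ 2))
     + 2^-1 * (\int[mu]_(x in D) (Tfun mu D rho rhos t x
                          * (Fcent mu D rho t (Phi t) x) ^+ 2 * Rt rho t x ^+ 2))
     >= - (\int[mu]_(x in D) ((Fcent mu D rho t (Phi t) x) ^+ 2 * Rt rho t x ^+ 2))
    /\
    (\int[mu]_(x in D) (derive1 (fun s => Tfun mu D rho rhos s x) t
                          * Tfun mu D rho rhos t x * Rt rho t x ^+ 2))
     = - (\int[mu]_(x in D) (Tfun mu D rho rhos t x * Phi t x * Rt rho t x ^+ 2))
       - 2^-1 * (\int[mu]_(x in D) (Tfun mu D rho rhos t x ^+ 2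
                          * Fcent mu D rho t (Phi t) x * Rt rho t x ^+ 2)).
Proof. by split; [exact: ineq1|exact: eq2]. Qed.

End Main.
Theorem lemma4 (d : measure_display) (T : measurableType d) (R : realType)
  (mu : {measure set T -> \bar R}) (D : set T) (I : set R)
  (rho Phi : R -> T -> R) (rhos : T -> R) :
  measurable D -> open I ->
  (forall t, I t -> pos_density mu D (rho t)) ->
  pos_density mu D rhos ->
  (forall t, I t -> measurable_fun D (Phi t)) ->
  (forall t, I t -> mu.-integrable D (fun x => ((Phi t x) ^+ 2 * rho t x)%:E)) ->
  (forall t, I t -> mu.-integrable D (fun x => ((Phi t x) ^+ 2 * rhos x)%:E)) ->
  (* d/dt rho_t = (Phi_t - E_{rho_t}[Phi_t]) rho_t, pointwise on D *)
  (forall t x, I t -> D x ->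
     is_derive t 1 (fun s => rho s x)
       ((Phi t x - expect mu D (rho t) (Phi t)) * rho t x)) ->
  (* regularity ("smoothness"): local domination of d/dt (R_t R^* ) *)
  (forall t, I t -> exists2 e : R, 0 < e &
     exists2 g : T -> R, mu.-integrable D (fun x => (g x)%:E) &
       forall s x, I s -> `|s - t| < e -> D x ->
         `|(Phi s x - expect mu D (rho s) (Phi s)) * Rt rho s x * Num.sqrt (rhos x)|
           <= g x) ->
  (* rho_t <> rho^* (as elements of L^1, i.e. not a.e. equal) *)
  (forall t, I t -> ~ {ae mu, forall x, D x -> rho t x = rhos x}) ->
  forall t, I t ->
    (\int[mu]_(x in D) (derive1 (fun s => Tfun mu D rho rhos s x) t
                          * Fcent mu D rho t (Phi t) x * Rt rho t x ^+ 2))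
     + 2^-1 * (\int[mu]_(x in D) (Tfun mu D rho rhos t x
                          * (Fcent mu D rho t (Phi t) x) ^+ 2 * Rt rho t x ^+ 2))
     >= - (\int[mu]_(x in D) ((Fcent mu D rho t (Phi t) x) ^+ 2 * Rt rho t x ^+ 2))
    /\
    (\int[mu]_(x in D) (derive1 (fun s => Tfun mu D rho rhos s x) t
                          * Tfun mu D rho rhos t x * Rt rho t x ^+ 2))
     = - (\int[mu]_(x in D) (Tfun mu D rho rhos t x * Phi t x * Rt rho t x ^+ 2))
       - 2^-1 * (\int[mu]_(x in D) (Tfun mu D rho rhos t x ^+ 2
                          * Fcent mu D rho t (Phi t) x * Rt rho t x ^+ 2)).
Proof.
move=> mD oI hrho hrhos mPhi iPr iPs hder hdom hne t It.
eapply main_sec; eassumption.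
Qed.
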